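(* Let $B$ be a log-product expression of degree $n$ and let $\gamma \geq 1$. Then there exist an integer $m \geq \log (1+n /\gamma)$ and $2m$ homogeneous expressions $P_1, \dots, P_{m} , S_1, \dots, S_{m}$ (possibly equal to $\epsilon$) such that $B \equiv P_1 P_2 \cdots P_{m} S_{m} S_{m-1} \cdots S_1$, $\deg P_i + \deg S_i \geq \gamma$ for all $i \in \{1,\dots,m-1\}$, and $\deg P_{m} +\deg S_{m} \leq \gamma$.
   Context: Regular expressions (without star, without $\emptyset$) are built from $\epsilon$ and letters by union and concatenation; $R\equiv R'$ means they describe the same language. A homogeneous expression describes a language all of whose words have the same length, its degree $\deg R$. A homogeneous expression $B$ is log-product if it is a letter, or there are homogeneous expressions $B_1,B_2$ with $B_1$ log-product, $\deg B_1\ge\deg B_2$ and $B=B_1B_2$ or $B=B_2B_1$. Logarithms are base 2. *)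

(* Defs.v *)
From Stdlib Require Import Reals List Arith.
Import ListNotations.
Set Implicit Arguments.

Inductive re (A : Type) : Type :=
| Eps : re A
| Let : A -> re A
| Plus : re A -> re A -> re A
| Cat : re A -> re A -> re A.
Arguments Eps {A}.

Fixpoint lang {A : Type} (r : re A) (w : list A) : Prop :=
  match r with
  | Eps => w = []
  | Let a => w = [a]
  | Plus r1 r2 => lang r1 w \/ lang r2 w
  | Cat r1 r2 => exists u v, w = u ++ v /\ lang r1 u /\ lang r2 v
  end.

Definition re_equiv {A : Type} (r s : re A) : Prop :=
  forall w, lang r w <-> lang s w.

(* r is homogeneous of degree d: every word of its language has length d.
   (Languages of star-free, emptyset-free expressions are nonempty, so the
   degree of a homogeneous expression is unique.) *)
Definition has_deg {A : Type} (r : re A) (d : nat) : Prop :=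
  forall w, lang r w -> length w = d.

Definition homogeneous {A : Type} (r : re A) : Prop := exists d, has_deg r d.

Inductive log_product {A : Type} : re A -> Prop :=
| lp_letter : forall a, log_product (Let a)
| lp_left : forall B1 B2 d1 d2,
    log_product B1 -> has_deg B1 d1 -> has_deg B2 d2 -> (d2 <= d1)%nat ->
    log_product (Cat B1 B2)
| lp_right : forall B1 B2 d1 d2,
    log_product B1 -> has_deg B1 d1 -> has_deg B2 d2 -> (d2 <= d1)%nat ->
    log_product (Cat B2 B1).

Fixpoint cat_list {A : Type} (l : list (re A)) : re A :=
  match l with
  | [] => Eps
  | [r] => r
  | r :: l' => Cat r (cat_list l')
  end.

Definition log2 (x : R) : R := (ln x / ln 2)%R.

(* Main.v *)
Require Import Defs.
From Stdlib Require Import Reals List Arith Lra Lia.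
Import ListNotations.

Section Aux.
Variable A : Type.

Definition lg := list A -> Prop.
Definition eps : lg := fun w => w = [].
Definition conc (L1 L2 : lg) : lg := fun w => exists u v, w = u ++ v /\ L1 u /\ L2 v.
Definition eqv (L1 L2 : lg) : Prop := forall w, L1 w <-> L2 w.

Lemma eqv_refl L : eqv L L. Proof. firstorder. Qed.
Lemma eqv_sym L1 L2 : eqv L1 L2 -> eqv L2 L1. Proof. firstorder. Qed.
Lemma eqv_trans L1 L2 L3 : eqv L1 L2 -> eqv L2 L3 -> eqv L1 L3.
Proof. unfold eqv; intros H1 H2 w; rewrite H1; auto. Qed.
Lemma conc_eqv L1 L2 M1 M2 : eqv L1 M1 -> eqv L2 M2 -> eqv (conc L1 L2) (conc M1 M2).
Proof. unfold eqv, conc; intros H1 H2 w; split; intros (u&v&->&Hu&Hv);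
  exists u, v; firstorder. Qed.
Lemma conc_assoc L1 L2 L3 : eqv (conc L1 (conc L2 L3)) (conc (conc L1 L2) L3).
Proof. unfold eqv, conc; intros w; split.
  - intros (u&v&->&Hu&(u'&v'&->&H2&H3)). exists (u++u'), v'; rewrite app_assoc; firstorder.
  - intros (u&v&->&(u'&v'&->&H2&H3)&Hv). exists u', (v'++v); rewrite app_assoc; firstorder.
Qed.
Lemma conc_eps_l L : eqv (conc eps L) L.
Proof. unfold eqv, conc, eps; intros w; split.
  - intros (u&v&->&->&Hv); exact Hv.
  - intros H; exists [], w; auto. Qed.
Lemma conc_eps_r L : eqv (conc L eps) L.
Proof. unfold eqv, conc, eps; intros w; split.
  - intros (u&v&->&Hu&->); rewrite app_nil_r; exact Hu.
  - intros H; exists w, []; rewrite app_nil_r; auto. Qed.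

Fixpoint clang (l : list (re A)) : lg :=
  match l with [] => eps | r :: l' => conc (lang r) (clang l') end.

Lemma clang_app l1 l2 : eqv (clang (l1 ++ l2)) (conc (clang l1) (clang l2)).
Proof. induction l1; simpl.
  - apply eqv_sym, conc_eps_l.
  - eapply eqv_trans; [apply conc_eqv; [apply eqv_refl|apply IHl1]|apply conc_assoc].
Qed.

Lemma cat_list_clang l : eqv (lang (cat_list l)) (clang l).
Proof. induction l as [|r l IH]; simpl. apply eqv_refl.
  destruct l as [|r' l'].
  - apply eqv_sym, conc_eps_r.
  - apply conc_eqv; [apply eqv_refl|exact IH]. Qed.

Lemma lang_ne (r : re A) : exists w, lang r w.
Proof. induction r; simpl.
  - exists []; auto.
  - exists [a]; auto.
  - destruct IHr1 as [w H]; exists w; auto.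
  - destruct IHr1 as [u H1]; destruct IHr2 as [v H2]; exists (u++v), u, v; auto.
Qed.

Lemma has_deg_unique (r : re A) a b : has_deg r a -> has_deg r b -> a = b.
Proof. intros Ha Hb; destruct (lang_ne r) as [w H]. rewrite <- (Ha w H); auto. Qed.

Lemma has_deg_cat (r1 r2 : re A) a b : has_deg r1 a -> has_deg r2 b -> has_deg (Cat r1 r2) (a+b).
Proof. intros H1 H2 w (u&v&->&Hu&Hv). rewrite length_app, (H1 u Hu), (H2 v Hv); auto. Qed.

Arguments has_deg_cat {r1 r2 a b}.
Lemma has_deg_eps : has_deg (@Eps A) 0.
Proof. intros w H; simpl in H; subst; auto. Qed.

Record layer := Layer { lP : re A; lS : re A; ldP : nat; ldS : nat }.
Definition dflt := Layer Eps Eps 0 0.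
Definition lsum l := INR (ldP l + ldS l).

Fixpoint good (g : R) (L : list layer) : Prop :=
  match L with
  | [] => False
  | a :: L' => match L' with
               | [] => (lsum a <= g)%R
               | _ => (g <= lsum a)%R /\ good g L'
               end
  end.

Lemma good_nth g L : good g L -> forall k, S k < length L -> (g <= lsum (nth k L dflt))%R.
Proof. induction L as [|a L IH]; simpl. tauto.
  destruct L as [|b L']. intros _ k Hk; simpl in Hk; lia.
  intros [H1 H2] [|k] Hk; simpl. exact H1.
  apply (IH H2 k). simpl in *; lia. Qed.

Lemma good_last g L : good g L -> (lsum (nth (length L - 1) L dflt) <= g)%R.
Proof. induction L as [|a L IH]; simpl. tauto.
  destruct L as [|b L']. simpl; auto.
  intros [_ H2]. specialize (IH H2). simpl in *. replace (length L' - 0) with (length L') in IH by lia.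
  exact IH. Qed.

Lemma map_nth_seq (L : list layer) s :
  map (fun i => nth (i - s) L dflt) (seq s (length L)) = L.
Proof. revert s; induction L as [|a L IH]; intros s; simpl. auto.
  rewrite Nat.sub_diag. f_equal. rewrite <- (IH (S s)) at 2.
  apply map_ext_in. intros i Hi. apply in_seq in Hi.
  replace (i - s) with (S (i - S s)) by lia. reflexivity. Qed.

Definition Concl (g : R) (X B Y : re A) (N : nat) : Prop :=
  exists L, Forall (fun l => has_deg (lP l) (ldP l) /\ has_deg (lS l) (ldS l)) L /\
    good g L /\
    eqv (conc (lang X) (conc (lang B) (lang Y))) (clang (map lP L ++ rev (map lS L))) /\
    (INR N <= g * (2 ^ length L - 1))%R.

Lemma single g X B Y x n y : has_deg X x -> has_deg B n -> has_deg Y y ->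
  (INR (x + y + n) <= g)%R -> Concl g X B Y (x + y + n).
Proof. intros HX HB HY Hle.
  exists [Layer (Cat X B) Y (x + n) y]. split; [|split; [|split]].
  - constructor; [|constructor]. simpl; split; auto. apply has_deg_cat; auto.
  - simpl. unfold lsum; simpl. replace (x + n + y) with (x + y + n) by lia. exact Hle.
  - simpl. eapply eqv_trans; [apply conc_assoc|].
    apply conc_eqv; [apply eqv_refl|]. apply eqv_sym, conc_eps_r.
  - simpl. lra.
Qed.

Lemma main g (Hg : (1 <= g)%R) (B : re A) : log_product B -> forall n, has_deg B n ->
  forall X Y x y, has_deg X x -> has_deg Y y -> (INR (x + y) < g)%R -> Concl g X B Y (x + y + n).
Proof.
  induction 1 as [a|B1 B2 d1 d2 HB1 IH H1 H2 Hd|B1 B2 d1 d2 HB1 IH H1 H2 Hd];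
    intros n Hn X Y x y HX HY Hxy;
    (destruct (Rle_lt_dec (INR (x + y + n)) g) as [Hle|Hgt]; [apply single; auto|]).
  -
    assert (n = 1) as ->.
    { eapply has_deg_unique; [exact Hn|]. intros w Hw; simpl in Hw; subst; auto. }
    exists [Layer (Cat X (Let a)) Y (x + 1) y; Layer Eps Eps 0 0].
    split; [|split; [|split]].
    + constructor; [|constructor; [|constructor]]; simpl; split; auto using has_deg_eps.
      apply has_deg_cat; auto.
    + simpl. unfold lsum; simpl. replace (x + 1 + y) with (x + y + 1) by lia. split; [lra|].
      simpl; lra.
    + simpl. eapply eqv_trans; [apply conc_assoc|].
      apply conc_eqv; [apply eqv_refl|].
      apply eqv_sym. eapply eqv_trans; [apply conc_eps_l|].
      eapply eqv_trans; [apply conc_eps_l|]. apply conc_eps_r.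
    + simpl. rewrite !plus_INR in *. simpl in *. lra.
  -
    assert (n = d1 + d2) as -> by (eapply has_deg_unique; [exact Hn|]; apply has_deg_cat; auto).
    destruct (Rlt_le_dec (INR (x + (d2 + y))) g) as [Hc|Hc].
    + destruct (IH d1 H1 X (Cat B2 Y) x (d2 + y) HX (has_deg_cat H2 HY) Hc)
        as (L & HF & HG & HE & HN).
      exists L. split; [exact HF|split; [exact HG|split]].
      * eapply eqv_trans; [|exact HE]. apply conc_eqv; [apply eqv_refl|].
        apply eqv_sym, conc_assoc.
      * replace (x + y + (d1 + d2)) with (x + (d2 + y) + d1) by lia. exact HN.
    + assert (H0 : (INR (0 + 0) < g)%R) by (simpl; lra).
      destruct (IH d1 H1 Eps Eps 0 0 has_deg_eps has_deg_eps H0) as (L & HF & HG & HE & HN).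
      exists (Layer X (Cat B2 Y) x (d2 + y) :: L). split; [|split; [|split]].
      * constructor; auto. simpl; split; auto. apply has_deg_cat; auto.
      * simpl. destruct L as [|b L']; [simpl in HG; tauto|]. split; auto.
      * simpl map. simpl rev. simpl clang. rewrite app_assoc.
        apply conc_eqv; [apply eqv_refl|].
        eapply eqv_trans; [apply eqv_sym, conc_assoc|].
        eapply eqv_trans; [|apply eqv_sym, clang_app].
        apply conc_eqv.
        -- eapply eqv_trans; [|exact HE]. apply eqv_sym.
           eapply eqv_trans; [apply conc_eps_l|apply conc_eps_r].
        -- simpl. apply eqv_sym, conc_eps_r.
      * simpl length. simpl pow. apply le_INR in Hd. rewrite !plus_INR in *. simpl in HN.
        rewrite Rplus_0_l in HN. set (t := 2 ^ length L) in *. lra.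
  -
    assert (n = d2 + d1) as -> by (eapply has_deg_unique; [exact Hn|]; apply has_deg_cat; auto).
    destruct (Rlt_le_dec (INR (x + d2 + y)) g) as [Hc|Hc].
    + destruct (IH d1 H1 (Cat X B2) Y (x + d2) y (has_deg_cat HX H2) HY Hc)
        as (L & HF & HG & HE & HN).
      exists L. split; [exact HF|split; [exact HG|split]].
      * eapply eqv_trans; [|exact HE].
        eapply eqv_trans; [apply conc_eqv; [apply eqv_refl|apply eqv_sym, conc_assoc]|].
        apply conc_assoc.
      * replace (x + y + (d2 + d1)) with (x + d2 + y + d1) by lia. exact HN.
    + assert (H0 : (INR (0 + 0) < g)%R) by (simpl; lra).
      destruct (IH d1 H1 Eps Eps 0 0 has_deg_eps has_deg_eps H0) as (L & HF & HG & HE & HN).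
      exists (Layer (Cat X B2) Y (x + d2) y :: L). split; [|split; [|split]].
      * constructor; auto. simpl; split; auto. apply has_deg_cat; auto.
      * simpl. destruct L as [|b L']; [simpl in HG; tauto|]. split; auto.
      * simpl map. simpl rev. simpl clang. rewrite app_assoc.
        eapply eqv_trans; [apply conc_eqv; [apply eqv_refl|apply eqv_sym, conc_assoc]|].
        eapply eqv_trans; [apply conc_assoc|].
        apply conc_eqv; [apply eqv_refl|].
        eapply eqv_trans; [|apply eqv_sym, clang_app].
        apply conc_eqv.
        -- eapply eqv_trans; [|exact HE]. apply eqv_sym.
           eapply eqv_trans; [apply conc_eps_l|apply conc_eps_r].
        -- simpl. apply eqv_sym, conc_eps_r.
      * simpl length. simpl pow. apply le_INR in Hd. rewrite !plus_INR in *. simpl in HN.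
        rewrite Rplus_0_l in HN. set (t := 2 ^ length L) in *. lra.
Qed.
End Aux.

Theorem proposition6p7 (A : Type) (B : re A) (n : nat) (gamma : R) :
  log_product B -> has_deg B n -> (1 <= gamma)%R ->
  exists (m : nat) (P S : nat -> re A) (dP dS : nat -> nat),
    (log2 (1 + INR n / gamma) <= INR m)%R /\
    (forall i, (1 <= i <= m)%nat -> has_deg (P i) (dP i) /\ has_deg (S i) (dS i)) /\
    re_equiv B (cat_list (map P (seq 1 m) ++ map S (rev (seq 1 m)))) /\
    (forall i, (1 <= i <= m - 1)%nat -> (gamma <= INR (dP i + dS i))%R) /\
    (INR (dP m + dS m) <= gamma)%R.
Proof.
  intros HB Hn Hg.
  assert (H0 : (INR (0 + 0) < gamma)%R) by (simpl; lra).
  destruct (@main A gamma Hg B HB n Hn Eps Eps 0 0 (has_deg_eps A) (has_deg_eps A) H0) as (L & HF & HG & HE & HN).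
  set (m := length L).
  assert (Hm : 1 <= m) by (unfold m; destruct L; simpl in *; [tauto|lia]).
  exists m, (fun i => lP A (nth (i - 1) L (dflt A))), (fun i => lS A (nth (i - 1) L (dflt A))),
    (fun i => ldP A (nth (i - 1) L (dflt A))), (fun i => ldS A (nth (i - 1) L (dflt A))).
  split; [|split; [|split; [|split]]].
  - simpl plus in HN.
    assert (Hl2 : (0 < ln 2)%R) by (pose proof ln_lt_2; lra).
    assert (Hpos : (0 < 1 + INR n / gamma)%R).
    { pose proof (pos_INR n). assert (0 <= INR n / gamma)%R by (unfold Rdiv; apply Rmult_le_pos; [lra|left; apply Rinv_0_lt_compat; lra]). lra. }
    assert (Hb : (1 + INR n / gamma <= 2 ^ m)%R).
    { apply Rmult_le_reg_l with gamma; [lra|].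
      replace (gamma * (1 + INR n / gamma))%R with (gamma + INR n)%R by (field; lra). fold m in HN. lra. }
    assert (Hln : (ln (1 + INR n / gamma) <= INR m * ln 2)%R).
    { rewrite <- ln_pow by lra. destruct (Rle_lt_or_eq_dec _ _ Hb) as [Hlt|Heq].
      - left; apply ln_increasing; auto.
      - rewrite Heq; lra. }
    unfold log2. replace (INR m) with (INR m * ln 2 / ln 2)%R by (field; lra).
    unfold Rdiv. apply Rmult_le_compat_r; [left; apply Rinv_0_lt_compat; lra|exact Hln].
  - intros i Hi. rewrite Forall_forall in HF. apply (HF (nth (i - 1) L (dflt A))).
    apply nth_In. unfold m in Hi; lia.
  - intros w. rewrite (cat_list_clang A _ w).
    replace (map (fun i => lP A (nth (i - 1) L (dflt A))) (seq 1 m)) with (map (@lP A) L).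
    2:{ rewrite <- (map_nth_seq A L 1) at 1. rewrite map_map. reflexivity. }
    rewrite map_rev.
    replace (map (fun i => lS A (nth (i - 1) L (dflt A))) (seq 1 m)) with (map (@lS A) L).
    2:{ rewrite <- (map_nth_seq A L 1) at 1. rewrite map_map. reflexivity. }
    rewrite <- (HE w). split.
    + intros Hw. exists [], w. split; auto. split; [reflexivity|]. exists w, []. rewrite app_nil_r. simpl; auto.
    + intros (u&v&->&Hu&(u'&v'&->&Hu'&Hv')). simpl in Hu, Hv'. subst. rewrite app_nil_r. exact Hu'.
  - intros i Hi. pose proof (good_nth A gamma L HG (i - 1)) as H. unfold lsum in H. apply H. unfold m in Hi; lia.
  - pose proof (good_last A gamma L HG) as H. unfold lsum in H. exact H.
Qed.
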